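(* Let $s,r,R$ be positive integers with $s,r\ge 2$. If there is a non-trivial $R$-perfect code in $\mathbb F_q^{s\times r}$ with respect to the NRT metric, then $(R+1)(r+1)\le sr$.
   Context: $q$ is a prime power, $\mathbb F_q^{s\times r}$ the set of $s\times r$ matrices over $\mathbb F_q$ with rows in $\mathbb F_q^{1\times r}$. For a row $y=(y_1,\dots,y_r)$, the NRT weight is $w(y)=\max\{j: y_j\neq 0\}$ if $y\ne0$ and $w(0)=0$; for a matrix, $w(x)=\sum_i w(x_i)$. The NRT metric is $d(x,y)=w(x-y)$; $B(c,R)=\{x: d(x,c)\le R\}$. A code $C$ is $R$-perfect if the balls $B(c,R)$, $c\in C$, are pairwise disjoint and cover $\mathbb F_q^{s\times r}$; non-trivial means $|C|>1$ and $C\ne\mathbb F_q^{s\times r}$. *)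

(* Defs.v *)
From HB Require Import structures.
From mathcomp Require Import all_boot all_order all_algebra.
Set Implicit Arguments. Unset Strict Implicit. Unset Printing Implicit Defensive.
Import GRing.Theory.
Local Open Scope ring_scope.

(* NRT weight of a row y in F^{1 x r}: largest 1-based index j with y_j <> 0,
   and 0 for the zero row. Column index j : 'I_r corresponds to position j+1. *)
Definition nrt_row_weight (F : finFieldType) (r : nat) (y : 'rV[F]_r) : nat :=
  \max_(j < r | y 0 j != 0) j.+1.

Definition nrt_weight (F : finFieldType) (s r : nat) (x : 'M[F]_(s, r)) : nat :=
  \sum_(i < s) nrt_row_weight (row i x).

Definition nrt_dist (F : finFieldType) (s r : nat) (x y : 'M[F]_(s, r)) : nat :=
  nrt_weight (x - y).

Definition nrt_ball (F : finFieldType) (s r : nat) (c : 'M[F]_(s, r)) (R : nat)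
  : {set 'M[F]_(s, r)} := [set x | nrt_dist x c <= R]%N.

Definition nrt_perfect (F : finFieldType) (s r : nat) (C : {set 'M[F]_(s, r)})
  (R : nat) : Prop :=
  (forall c1 c2, c1 \in C -> c2 \in C -> c1 != c2 ->
     [disjoint nrt_ball c1 R & nrt_ball c2 R]) /\
  (forall x : 'M[F]_(s, r), exists2 c, c \in C & x \in nrt_ball c R).

Definition nontrivial_code (F : finFieldType) (s r : nat) (C : {set 'M[F]_(s, r)})
  : Prop := (1 < #|C|)%N /\ C != [set: 'M[F]_(s, r)].

(* Main.v *)
Require Import Defs.
From mathcomp Require Import all_boot all_order all_algebra.
From mathcomp Require Import zify.
Set Implicit Arguments. Unset Strict Implicit. Unset Printing Implicit Defensive.
Import GRing.Theory.

Lemma cnt s a c : \sum_(i < s) ((a <= i) && (i < c) : nat) = minn c s - a.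
Proof.
elim: s => [|s IH]; first by rewrite big_ord0 minn0.
rewrite big_ord_recr /= IH.
case: (leqP a s) => h1; case: (ltnP s c) => h2 /=; lia.
Qed.

Lemma clampsum s a n : \sum_(i < s) minn a (n - i * a) = minn n (s * a).
Proof.
elim: s => [|s IH]; first by rewrite big_ord0 mul0n minn0.
rewrite big_ord_recr /= IH; nia.
Qed.

Definition splitn s (g : 'I_s -> nat) R :=
  exists P : pred 'I_s, \sum_(i | P i) g i <= R /\ \sum_(i | ~~ P i) g i <= R.

Lemma sum_if_le s (P : pred 'I_s) (g h : 'I_s -> nat) :
  (forall i, P i -> g i <= h i) -> \sum_(i | P i) g i <= \sum_i h i.
Proof.
move=> H; rewrite big_mkcond; apply: leq_sum => i _; case: ifP => // Pi; exact: H.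
Qed.

Lemma combA s (b f g : 'I_s -> nat) R i0 :
  \sum_i b i <= R.+1 -> \sum_i f i <= R -> (forall i, g i <= maxn (b i) (f i)) ->
  0 < b i0 -> b i0 <= f i0 -> splitn g R.
Proof.
move=> hb hf hg b0 bf; exists (fun i => b i <= f i); split.
  apply: leq_trans hf; apply: sum_if_le => i Pi; move: (hg i); lia.
have : \sum_(i | ~~ (b i <= f i)) g i <= \sum_(i | i != i0) b i.
  rewrite big_mkcond [X in _ <= X]big_mkcond; apply: leq_sum => i _.
  case: ifP => Pi; last by [].
  have -> : i != i0 by apply: contraNneq Pi => ->.
  move: (hg i) Pi; lia.
rewrite (bigD1 i0) //= in hb; set S := \sum_(i | i != i0) b i in hb *; lia.
Qed.

Lemma comb1 s (b f g : 'I_s -> nat) R :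
  1 < s -> (forall i, 0 < b i) -> \sum_i b i = R.+1 -> \sum_i f i <= R ->
  (forall i, g i <= maxn (b i) (f i)) -> splitn g R.
Proof.
move=> s2 bpos hb hf hg.
case: (boolP [exists i, b i <= f i]) => [/existsP [i0 hi0]|/existsPn hn].
  by apply: (combA (i0 := i0) _ hf hg) => //; rewrite ?hb ?bpos.
have hg' : forall i, g i <= b i by move=> i; move: (hg i) (hn i); lia.
pose i0 : 'I_s := Ordinal (ltnW s2).
pose j0 : 'I_s := Ordinal s2.
have ne : j0 != i0 by [].
exists (fun i => i == i0); split.
  rewrite big_pred1_eq.
  have : b i0 + b j0 <= R.+1.
    by rewrite -hb (bigD1 i0) //= (bigD1 j0) //=; lia.
  move: (hg' i0) (bpos j0); lia.
have : \sum_(i | i != i0) g i <= \sum_(i | i != i0) b i by apply: leq_sum => i _; exact: hg'.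
rewrite (bigD1 i0) //= in hb; set S := \sum_(i | i != i0) b i in hb *; set T := \sum_(i | i != i0) g i; move: (bpos i0); lia.
Qed.

Definition bI a R (i : nat) : nat := ((a <= i) && (i < a + R.+1)).

Lemma bI01 a R i : bI a R i <= 1.
Proof. by rewrite /bI; case: (_ && _). Qed.

Lemma sum_bI s a R : a + R < s -> \sum_(i < s) bI a R i = R.+1.
Proof. by move=> h; rewrite /bI cnt; lia. Qed.

Lemma sum_cbI s a R r : a + R < s -> \sum_(i < s) (1 - bI a R i) * r = s * r - R.+1 * r.
Proof.
move=> h.
have e1 : \sum_(i < s) (1 - bI a R i) + \sum_(i < s) bI a R i = s.
  rewrite -big_split (eq_bigr (fun _ => 1)); first by rewrite sum_nat_const card_ord muln1.
  by move=> i _; move: (bI01 a R i); case: (bI a R i) => [|[|]].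
rewrite (sum_bI h) in e1.
rewrite -big_distrl /= -mulnBl; congr (_ * _); move: e1; set Y := \sum_(i < s) (1 - bI a R i); lia.
Qed.

Lemma comb2 s (f g : 'I_s -> nat) R r a :
  a + R < s -> (forall i, f i <= r) -> \sum_i f i <= R ->
  s * r - R.+1 * r <= R ->
  (forall i : 'I_s, g i <= maxn (bI a R i) (f i)) ->
  splitn g R \/ ((forall i : 'I_s, bI a R i = 1 -> f i = 0) /\ (forall i : 'I_s, bI a R i = 0 -> f i = r)).
Proof.
move=> hs fr hf hsr hg.
have hb := sum_bI hs.
case: (boolP [exists i : 'I_s, (0 < bI a R i) && (bI a R i <= f i)]) => [/existsP [i0 /andP [h1 h2]]|/existsPn hn].
  by left; apply: (combA (i0 := i0) _ hf hg) => //; rewrite hb.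
have hK : forall i : 'I_s, bI a R i = 1 -> f i = 0.
  by move=> i e; move: (hn i); rewrite e /=; lia.
set F := \sum_i f i in hf.
case: (ltnP F R) => hFR.
  left; exists (fun i : 'I_s => ~~ ((a + R - F <= i) && (i < a + R.+1))); split.
    have : \sum_(i : 'I_s | ~~ ((a + R - F <= i) && (i < a + R.+1))) g i <=
           \sum_(i < s) ((a <= i) && (i < a + R - F) : nat) + F.
      rewrite /F -big_split big_mkcond /=; apply: leq_sum => i _.
      case: ifP => //; move: (hg i); rewrite /bI.
      case: (leqP a i); case: (leqP (a + R - F) i); case: (ltnP i (a + R.+1)) => /=; lia.
    move=> H; apply: (leq_trans H); rewrite cnt; lia.
  have : \sum_(i : 'I_s | ~~ ~~ ((a + R - F <= i) && (i < a + R.+1))) g i <=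
         \sum_(i < s) ((a + R - F <= i) && (i < a + R.+1) : nat).
    rewrite big_mkcond /=; apply: leq_sum => i _.
    rewrite negbK; case: ifP => // /andP [w1 w2].
    have bi : bI a R i = 1 by rewrite /bI; apply/eqP; rewrite eqb1; apply/andP; split => //; lia.
    by move: (hg i); rewrite bi (hK i bi); lia.
  move=> H; apply: (leq_trans H); rewrite cnt; lia.
right; split => // i0 e0; apply/eqP; rewrite eqn_leq fr /=; rewrite leqNgt; apply/negP => lt.
have : F + 1 <= \sum_(i < s) (1 - bI a R i) * r.
  have e : \sum_(i < s) (i == i0 : nat) = 1.
    by rewrite (bigD1 i0) //= eqxx big1 // => i /negbTE ->.
  apply: (@leq_trans (F + \sum_(i < s) (i == i0 : nat))); first by rewrite e.
  rewrite /F -big_split; apply: leq_sum => i _ /=.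
  case: eqP => [->|_]; first by rewrite e0; lia.
  move: (bI01 a R i) (hK i) (fr i); case: (bI a R i) => [|[|]] //=; lia.
rewrite sum_cbI //; lia.
Qed.
Section W.
Variables (F : finFieldType) (s r : nat).
Local Notation M := 'M[F]_(s, r).

Definition rw (A : M) (i : 'I_s) : nat := nrt_row_weight (row i A).

Lemma rw_le (A : M) i t : (rw A i <= t) <-> (forall k : 'I_r, t <= k -> A i k = 0%R).
Proof.
rewrite /rw /nrt_row_weight; split.
- move/bigmax_leqP=> H k tk; apply/eqP; apply: contraTT tk => nz.
  have := H k; rewrite mxE => /(_ nz); rewrite -ltnNge.
  done.
- move=> H; apply/bigmax_leqP => k; rewrite mxE => nz.
  rewrite leqNgt ltnS; apply: contra nz => tk; apply/eqP; exact: H.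
Qed.

Lemma rw_ge (A : M) i (k : 'I_r) : A i k != 0%R -> k.+1 <= rw A i.
Proof.
move=> nz; rewrite /rw /nrt_row_weight.
by apply: leq_bigmax_cond; rewrite mxE.
Qed.

Lemma rw_eqnz (A B : M) i j : (forall k, (A i k != 0%R) = (B j k != 0%R)) -> rw A i = rw B j.
Proof. by move=> H; rewrite /rw /nrt_row_weight; apply: eq_bigl => k; rewrite !mxE H. Qed.

Lemma rw_opp (A : M) i : rw (- A)%R i = rw A i.
Proof. by apply: rw_eqnz => k; rewrite mxE oppr_eq0. Qed.

Lemma rw_add (A B : M) i : rw (A + B)%R i <= maxn (rw A i) (rw B i).
Proof.
apply/rw_le => k; rewrite geq_max => /andP[ha hb].
have /rw_le HA := leqnn (rw A i); have /rw_le HB := leqnn (rw B i).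
by rewrite mxE HA // HB // addr0.
Qed.

Lemma rw_sub (A B : M) i : rw (A - B)%R i <= maxn (rw A i) (rw B i).
Proof. by rewrite -(rw_opp B); apply: rw_add. Qed.

Lemma rw_ler (A : M) i : rw A i <= r.
Proof. by apply/rw_le => k; rewrite leqNgt ltn_ord. Qed.

Lemma rw0 (A : M) i : rw A i = 0 -> forall k, A i k = 0%R.
Proof. by move=> h k; have /rw_le := leqnn (rw A i); rewrite h; apply. Qed.

Lemma w_sum (A : M) : nrt_weight A = \sum_i rw A i.
Proof. by []. Qed.

Definition split_at (z : M) (R : nat) :=
  exists P : pred 'I_s, \sum_(i | P i) rw z i <= R /\ \sum_(i | ~~ P i) rw z i <= R.

Lemma nosplit (C : {set M}) R c1 c2 : nrt_perfect C R -> c1 \in C -> c2 \in C ->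
  split_at (c1 - c2)%R R -> c1 = c2.
Proof.
move=> [disj _] h1 h2 [P [hP hnP]].
apply/eqP; apply/negPn/negP => ne.
have D := disj _ _ h1 h2 ne.
set z := (c1 - c2)%R.
pose x : M := (\matrix_(i, k) (if P i then z i k else 0))%R.
have hx : nrt_weight x <= R.
  rewrite w_sum (eq_bigr (fun i => if P i then rw z i else 0)) -?big_mkcond //.
  move=> i _; case: ifP => Pi.
    by apply: rw_eqnz => k; rewrite mxE Pi.
  by apply/eqP; rewrite -leqn0; apply/rw_le => k _; rewrite mxE Pi.
have hzx : nrt_weight (z - x)%R <= R.
  rewrite w_sum (eq_bigr (fun i => if ~~ P i then rw z i else 0)) -?big_mkcond //.
  move=> i _; case: ifP => Pi.
    by apply: rw_eqnz => k; rewrite !mxE (negbTE Pi) subr0.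
  by apply/eqP; rewrite -leqn0; apply/rw_le => k _; rewrite !mxE (negbFE Pi) subrr.
have in2 : (c2 + x)%R \in nrt_ball c2 R.
  by rewrite inE /nrt_dist addrC addKr.
have in1 : (c2 + x)%R \in nrt_ball c1 R.
  rewrite inE /nrt_dist.
  have -> : (c2 + x - c1 = - (z - x))%R by rewrite /z opprB opprB addrA [(x + c2)%R]addrC.
  by rewrite w_sum (eq_bigr (fun i => rw (z - x)%R i)) // => i _; rewrite rw_opp.
by rewrite (disjointFr D in1) in in2.
Qed.

End W.

Section Alg.
Local Open Scope ring_scope.
Lemma l1 (V : zmodType) (c0 y c : V) : y - (c0 + y - c) = c - c0.
Proof. by rewrite opprB opprD addrCA [y + _]addrC addrNK addrC. Qed.
Lemma l2 (V : zmodType) (c0 y c : V) : c0 + y - (c0 + y - c) = c.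
Proof. by rewrite opprB addrC addrNK. Qed.
Lemma l3 (V : zmodType) (c0 a b : V) : (c0 + a) - (c0 + b) = a - b.
Proof. by rewrite opprD addrACA addrN add0r. Qed.
Lemma l4 (V : zmodType) (c x : V) : c + x - c = x.
Proof. by rewrite addrC addKr. Qed.
End Alg.

Section Y.
Variables (F : finFieldType) (s r : nat).
Local Notation M := 'M[F]_(s, r).

Definition mkY (b : 'I_s -> nat) : M := (\matrix_(i, k) (if k.+1 == b i then 1 else 0))%R.

Lemma mkY_le b i : rw (mkY b) i <= b i.
Proof.
apply/rw_le => k bk; rewrite mxE; case: eqP => // e.
by move: bk; rewrite -e ltnn.
Qed.

Lemma mkY_ge b i : b i <= r -> b i <= rw (mkY b) i.
Proof.
move=> br; case: (posnP (b i)) => [->//|bp].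
have kl : (b i).-1 < r by lia.
have := @rw_ge _ _ _ (mkY b) i (Ordinal kl); rewrite mxE /=.
rewrite prednK // eqxx => H; apply: H; exact: oner_neq0.
Qed.

Lemma mkY_w b R : (forall i, b i <= r) -> \sum_i b i = R.+1 -> R < nrt_weight (mkY b).
Proof.
move=> br hb; rewrite w_sum -hb; apply: leq_sum => i _; exact: mkY_ge.
Qed.

Lemma cover (C : {set M}) R c0 y : nrt_perfect C R -> c0 \in C -> R < nrt_weight y ->
  exists e : M, [/\ nrt_weight e <= R, ~ split_at (y - e)%R R & (c0 + y - e)%R \in C].
Proof.
move=> perf h0 hy; have [_ cov] := perf.
have [c hc hb] := cov (c0 + y)%R.
exists (c0 + y - c)%R; split.
- by move: hb; rewrite inE.
- move=> sp.
  have ez : (y - (c0 + y - c) = c - c0)%R.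
    exact: l1.
  rewrite ez in sp; have ec := nosplit perf hc h0 sp.
  move: hy hb; rewrite ec inE /nrt_dist.
  have -> : (c0 + y - c0 = y)%R by rewrite addrC addKr.
  lia.
- by rewrite l2.
Qed.

End Y.

Theorem mainTheorem10 (F : finFieldType) (s r R : nat) :
  (2 <= s)%N -> (2 <= r)%N -> (0 < R)%N ->
  (exists C : {set 'M[F]_(s, r)}, nontrivial_code C /\ nrt_perfect C R) ->
  ((R.+1) * (r.+1) <= s * r)%N.
Proof.
move=> s2 r2 R0 [C [[cardC _] perf]].
have [c0 [c1 [h0 h1 ne]]] := card_gt1P cardC.
rewrite leqNgt; apply/negP => hlt.
case: (leqP (s * r) R) => hR.
  have : split_at (c1 - c0)%R R.
    exists predT; split.
      apply: leq_trans hR; apply: leq_trans (sum_if_le (h := fun _ => r) _) _.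
        by move=> i _; apply: rw_ler.
      by rewrite sum_nat_const card_ord.
    apply: leq_trans (sum_if_le (h := fun _ => 0) _) _ => //.
    by rewrite big1.
  by move/(nosplit perf h1 h0) => e; rewrite e eqxx in ne.
case: (leqP s R.+1) => hsR.
  pose n := R.+1 - s.
  pose b := fun i : 'I_s => 1 + minn (r - 1) (n - i * (r - 1)).
  have hb : \sum_i b i = R.+1.
    rewrite big_split /= clampsum sum_nat_const card_ord muln1; nia.
  have br : forall i, b i <= r by move=> i; rewrite /b; lia.
  have [e [we nsp _]] := cover perf h0 (@mkY_w F s r b R br hb).
  apply: nsp; apply: (comb1 (b := b) (f := rw e)) => //.
  move=> i; apply: leq_trans (rw_sub _ _ _) _.
  by rewrite geq_max !leq_max leqnn orbT (@mkY_le F s r b i).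
have hsr : s * r - R.+1 * r <= R by nia.
have key : forall a, a + R < s -> exists e : 'M[F]_(s, r),
    (c0 + mkY F r (fun i => bI a R i) - e)%R \in C /\
    (forall i : 'I_s, bI a R i = 1 -> rw e i = 0) /\ (forall i : 'I_s, bI a R i = 0 -> rw e i = r).
  move=> a ha.
  have br : forall i : 'I_s, bI a R i <= r by move=> i; move: (bI01 a R i); lia.
  have [e [we nsp inC]] := cover perf h0 (@mkY_w F s r _ R br (sum_bI ha)).
  exists e; split => //.
  have := @comb2 s (rw e) (rw (mkY F r (fun i => bI a R i) - e)%R) R r a ha (fun i => rw_ler e i) we hsr.
  case.
  - move=> i; apply: leq_trans (rw_sub _ _ _) _.
    by rewrite geq_max !leq_max leqnn orbT (@mkY_le F s r (fun i => bI a R i) i).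
  - by move=> sp; exfalso; apply: nsp.
  - by [].
have [e0 [in0 [K0 N0]]] := key 0 ltac:(lia).
have [e1 [in1 [K1 N1]]] := key 1 ltac:(lia).
set y0 := mkY F r (fun i => bI 0 R i) in in0.
set y1 := mkY F r (fun i => bI 1 R i) in in1.
have ez : ((c0 + y0 - e0) - (c0 + y1 - e1) = (y0 - e0) - (y1 - e1))%R.
  by rewrite -[(c0 + y0 - e0)%R]addrA -[(c0 + y1 - e1)%R]addrA l3.
have sp : split_at ((c0 + y0 - e0) - (c0 + y1 - e1))%R R.
  rewrite ez.
  exists (fun i : 'I_s => bI 1 R i == 0); split.
    apply: leq_trans (sum_if_le (h := fun i => (1 - bI 1 R i) * r) _) _.
      by move=> i /eqP ->; rewrite subn0 mul1n rw_ler.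
    by rewrite sum_cbI //; lia.
  pose j : 'I_s := Ordinal (hsR : R.+1 < s).
  apply: leq_trans (sum_if_le (h := fun i => if i == j then r else 0) _) _.
    move=> i; case: (i =P j) => [->|nij]; first by rewrite rw_ler.
    move=> nz.
    have b1 : bI 1 R i = 1 by move: (bI01 1 R i) nz; case: (bI 1 R i) => [|[|]].
    have b0 : bI 0 R i = 1.
      move: b1; rewrite /bI; case: (leqP 1 i); case: (ltnP i (1 + R.+1)) => //= g1 g2 _.
      have : (i : nat) != R.+1 by apply/eqP => e; apply: nij; apply: val_inj.
      case: (leqP 0 i); case: (ltnP i (0 + R.+1)) => //=; lia.
    apply/rw_le => k _.
    rewrite !mxE (rw0 (K0 i b0)) (rw0 (K1 i b1)) /= b0 b1 !subr0 subrr //.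
  rewrite (bigD1 j) //= eqxx big1 => [|i /negbTE -> //]; nia.
have e01 := nosplit perf in0 in1 sp.
have i0l : 0 < s by lia.
pose o : 'I_s := Ordinal i0l.
have bo0 : bI 0 R o = 1 by [].
have bo1 : bI 1 R o = 0 by [].
have hr := N1 o bo1.
have : rw y0 o = rw (- e1)%R o.
  apply: rw_eqnz => k.
  have := congr1 (fun M : 'M[F]_(s, r) => ((M - c0) o k)%R) e01.
  rewrite /= !mxE (rw0 (K0 o bo0)) /bI /= subr0 l4 -[(c0 o k + _ - _)%R]addrA l4 sub0r.
  by move=> ->.
rewrite rw_opp hr => er.
have := @mkY_le F s r (fun i => bI 0 R i) o; rewrite -/y0 er bo0; lia.
Qed.
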